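(* Let $K$ be a $p$-adic number field and $f\in\mathcal{A}_K[1,1]$. Let $q$ be a positive power of $p$, and assume there exist $\zeta,\zeta'\in\mu_\infty$ with $f(\zeta)=\zeta'$. If $f(X)^q=f(X^q)$ (as Laurent series), then $f$ is special.
   Context: $\mathbb{C}_p$ is the completion of an algebraic closure of $\mathbb{Q}_p$ containing $K$; $\mu_\infty$ is the group of roots of unity in $\mathbb{C}_p$. $\mathcal{A}_K[1,1]$ is the set of Laurent series $\sum_{n\in\mathbb{Z}}f_nX^n$ with $f_n\in K$ and $|f_n|_p\to0$ as $|n|\to\infty$. $f$ is special if $f=\eta X^m$ for some $\eta\in\mu_\infty$ and $m\in\mathbb{Z}$. *)

(* Defs.v *)
From HB Require Import structures.
From mathcomp Require Import all_boot all_order all_algebra.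
From mathcomp Require Import reals.
Set Implicit Arguments. Unset Strict Implicit. Unset Printing Implicit Defensive.
Import Order.TTheory GRing.Theory Num.Theory.
Local Open Scope ring_scope.

Section Padic.
Variables (R : realType) (C : fieldType) (abs : C -> R).

Definition seq_cvg_to (u : nat -> C) (l : C) : Prop :=
  forall eps : R, 0 < eps ->
    exists N : nat, forall n : nat, (N <= n)%N -> abs (u n - l) < eps.

Definition cauchy_seq (u : nat -> C) : Prop :=
  forall eps : R, 0 < eps -> exists N : nat,
    forall m n : nat, (N <= m)%N -> (N <= n)%N -> abs (u m - u n) < eps.

Definition is_p_adic_abs (p : nat) : Prop :=
  [/\ forall x, 0 <= abs x,
      forall x, abs x = 0 <-> x = 0,
      forall x y, abs (x * y) = abs x * abs y,
      forall x y, abs (x + y) <= Num.max (abs x) (abs y) &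
      abs (p%:R) = (p%:R)^-1].

Definition Qp_elt (x : C) : Prop :=
  exists u : nat -> rat, seq_cvg_to (fun n => ratr (u n)) x.

Definition algebraic_over_Qp (x : C) : Prop :=
  exists P : {poly C}, [/\ P != 0, forall i, Qp_elt P`_i & root P x].

(* (C, abs) is C_p: complete, algebraically closed, and the completion of
   the algebraic closure of Q_p (algebraic elements are dense) *)
Definition is_Cp (p : nat) : Prop :=
  [/\ is_p_adic_abs p,
      GRing.closed_field_axiom C,
      forall u, cauchy_seq u -> exists l, seq_cvg_to u l &
      forall x (eps : R), 0 < eps ->
        exists y, algebraic_over_Qp y /\ abs (x - y) < eps].

Definition is_padic_field (K : C -> Prop) : Prop :=
  [/\ forall x, Qp_elt x -> K x,
      forall x y, K x -> K y -> K (x + y) /\ K (- x) /\ K (x * y),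
      forall x, K x -> x != 0 -> K x^-1 &
      exists s : seq C, (forall i, (i < size s)%N -> K s`_i) /\
        forall x, K x -> exists c : nat -> C,
          (forall i, Qp_elt (c i)) /\ x = \sum_(i < size s) c i * s`_i].

(* Laurent series f = sum_n f n X^n, coefficients in K, |f n| -> 0 *)
Definition in_AK11 (K : C -> Prop) (f : int -> C) : Prop :=
  (forall n, K (f n)) /\
  forall eps : R, 0 < eps -> exists N : nat,
    forall n : int, (N < `|n|)%N -> abs (f n) < eps.

Definition two_sided_sum_to (a : int -> C) (l : C) : Prop :=
  seq_cvg_to (fun N => \sum_(0 <= k < N.*2.+1) a (k%:Z - N%:Z)) l.

Definition laurent_mul_to (g h r : int -> C) : Prop :=
  forall n : int, two_sided_sum_to (fun k => g k * h (n - k)) (r n).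

Fixpoint laurent_pow_to (f : int -> C) (k : nat) (r : int -> C) : Prop :=
  match k with
  | 0 => forall n, r n = (n == 0)%:R
  | k'.+1 => exists s, laurent_pow_to f k' s /\ laurent_mul_to s f r
  end.

Definition laurent_subst_pow (q : nat) (f : int -> C) : int -> C :=
  fun n => if (q%:Z %| n)%Z then f (n %/ q%:Z)%Z else 0.

Definition laurent_eval_to (f : int -> C) (z w : C) : Prop :=
  two_sided_sum_to (fun n => f n * z ^ n) w.

Definition is_root_of_unity_C (z : C) : Prop :=
  exists n : nat, (0 < n)%N /\ z ^+ n = 1.

Definition special (f : int -> C) : Prop :=
  exists (eta : C) (m : int), is_root_of_unity_C eta /\
    forall n : int, f n = if n == m then eta else 0.

End Padic.

(* Main.v *)
Require Import Defs.
From HB Require Import structures.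
From mathcomp Require Import all_boot all_order all_algebra zify ring lra.
From mathcomp Require Import reals.
From mathcomp Require Import closed_field separable cyclic.
From Stdlib Require ClassicalEpsilon FunctionalExtensionality Classical_Prop.
Import Order.TTheory GRing.Theory Num.Theory.
Local Open Scope ring_scope.
Set Implicit Arguments. Unset Strict Implicit. Unset Printing Implicit Defensive.

Section Basic.
Variables (R : realType) (C : fieldType) (abs : C -> R).
Hypothesis abs_ge0 : forall x, 0 <= abs x.
Hypothesis abs_eq0 : forall x, abs x = 0 <-> x = 0.
Hypothesis absM : forall x y, abs (x * y) = abs x * abs y.
Hypothesis absD : forall x y, abs (x + y) <= Num.max (abs x) (abs y).

Lemma abs0 : abs 0 = 0. Proof. by apply/abs_eq0. Qed.
Lemma abs1 : abs 1 = 1.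
Proof.
have h : abs 1 = abs 1 * abs 1 by rewrite -absM mulr1.
have nz : abs 1 != 0 by apply/eqP => /abs_eq0 /eqP; rewrite oner_eq0.
by apply: (mulfI nz); rewrite mulr1 -h.
Qed.
Lemma absN1 : abs (-1) = 1.
Proof.
have h : abs (-1) * abs (-1) = 1 by rewrite -absM mulrNN mulr1 abs1.
have := abs_ge0 (-1); move: h; set a := abs (-1) => h ha.
have : (a - 1) * (a + 1) = 0.
  have -> : (a - 1) * (a + 1) = a * a - 1 by ring.
  by rewrite h subrr.
move/eqP; rewrite mulf_eq0 => /orP [/eqP h1|/eqP h1]; first by lra.
lra.
Qed.
Lemma absN x : abs (- x) = abs x.
Proof. by rewrite -mulN1r absM absN1 mul1r. Qed.
Lemma absB x y : abs (x - y) = abs (y - x).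
Proof. by rewrite -absN opprB. Qed.
Lemma absDle x y B : abs x <= B -> abs y <= B -> abs (x + y) <= B.
Proof. move=> hx hy; apply: le_trans (absD x y) _; by rewrite ge_max hx hy. Qed.
Lemma absDlt x y B : abs x < B -> abs y < B -> abs (x + y) < B.
Proof. move=> hx hy; apply: le_lt_trans (absD x y) _; by rewrite gt_max hx hy. Qed.
Lemma absBle x y B : abs x <= B -> abs y <= B -> abs (x - y) <= B.
Proof. by move=> hx hy; apply: absDle; rewrite ?absN. Qed.
Lemma absBlt x y B : abs x < B -> abs y < B -> abs (x - y) < B.
Proof. by move=> hx hy; apply: absDlt; rewrite ?absN. Qed.
Lemma absD_eq x y : abs y < abs x -> abs (x + y) = abs x.
Proof.
move=> h; apply/eqP; rewrite eq_le; apply/andP; split.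
  by apply: absDle => //; apply: ltW.
have e : x = (x + y) - y by rewrite addrK.
have := absD (x + y) (- y); rewrite -e absN le_max => /orP [] // h2.
by move: (lt_le_trans h h2); rewrite ltxx.
Qed.
Lemma absX x n : abs (x ^+ n) = abs x ^+ n.
Proof. by elim: n => [|n IH]; rewrite ?expr0 ?abs1 // !exprS absM IH. Qed.
Lemma absV x : abs (x^-1) = (abs x)^-1.
Proof.
have [->|nz] := eqVneq x 0; first by rewrite invr0 abs0 invr0.
have h : abs x * abs (x^-1) = 1 by rewrite -absM mulfV // abs1.
have ax : abs x != 0 by apply/eqP => /abs_eq0; apply/eqP.
by rewrite -[abs x^-1]mul1r -(mulVf ax) -mulrA h mulr1.
Qed.
Lemma absXz x (n : int) : abs (x ^ n) = abs x ^ n.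
Proof. by case: n => n /=; rewrite ?absV absX. Qed.
Lemma absXz1 x (n : int) : abs x = 1 -> abs (x ^ n) = 1.
Proof. by move=> h; rewrite absXz h exp1rz. Qed.
Lemma abs_nat_le1 n : abs n%:R <= 1.
Proof.
elim: n => [|n IH]; first by rewrite abs0.
by rewrite -addn1 natrD; apply: absDle => //; rewrite abs1.
Qed.
Lemma abs_neq0 x : x != 0 -> 0 < abs x.
Proof.
move=> nz; rewrite lt_def abs_ge0 andbT; apply/eqP => /abs_eq0; apply/eqP=> //.
Qed.

Lemma abs_sum_le (I : Type) (s : seq I) (P : pred I) (F : I -> C) B :
  0 <= B -> (forall i, P i -> abs (F i) <= B) -> abs (\sum_(i <- s | P i) F i) <= B.
Proof.
move=> hB hF; elim: s => [|x s IH]; first by rewrite big_nil abs0.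
rewrite big_cons; case: ifP => // Px; exact: absDle (hF _ Px) IH.
Qed.
Lemma abs_sum_lt (I : Type) (s : seq I) (P : pred I) (F : I -> C) B :
  0 < B -> (forall i, P i -> abs (F i) < B) -> abs (\sum_(i <- s | P i) F i) < B.
Proof.
move=> hB hF; elim: s => [|x s IH]; first by rewrite big_nil abs0.
rewrite big_cons; case: ifP => // Px; exact: absDlt (hF _ Px) IH.
Qed.
Lemma abs_prod (I : Type) (s : seq I) (F : I -> C) :
  abs (\prod_(i <- s) F i) = \prod_(i <- s) abs (F i).
Proof. elim: s => [|x s IH]; by rewrite ?big_nil ?abs1 // !big_cons absM IH. Qed.


Notation cvg := (seq_cvg_to abs).

Lemma cvg_unique u l m : cvg u l -> cvg u m -> l = m.
Proof.
move=> hl hm; apply/eqP/negPn/negP => ne.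
have pos : 0 < abs (l - m) by apply: abs_neq0; rewrite subr_eq0.
have [N1 h1] := hl _ pos; have [N2 h2] := hm _ pos.
have a1 := h1 (maxn N1 N2) (leq_maxl _ _); have a2 := h2 (maxn N1 N2) (leq_maxr _ _).
have e : l - m = (u (maxn N1 N2) - m) - (u (maxn N1 N2) - l) by ring.
have := absBlt a2 a1; rewrite -e ltxx //.
Qed.

Lemma cvg_le u l N0 B : cvg u l -> (forall n, (N0 <= n)%N -> abs (u n) <= B) -> abs l <= B.
Proof.
move=> hl hB; rewrite leNgt; apply/negP => hlt.
have B0 : 0 <= B by apply: le_trans (abs_ge0 (u N0)) (hB _ (leqnn _)).
have pos : 0 < abs l - B by rewrite subr_gt0.
have [N h] := hl _ pos; set n := maxn N N0.
have a1 := h n (leq_maxl _ _); have a2 := hB n (leq_maxr _ _).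
have e : l = u n - (u n - l) by ring.
have : abs l < abs l.
  rewrite {1}e; apply: absBlt; first by apply: le_lt_trans a2 _.
  by apply: lt_le_trans a1 _; lra.
by rewrite ltxx.
Qed.

Lemma cvg_eq_norm u l N0 A : 0 < A -> cvg u l -> (forall n, (N0 <= n)%N -> abs (u n) = A) -> abs l = A.
Proof.
move=> A0 hl hA; apply/eqP; rewrite eq_le; apply/andP; split.
  by apply: (cvg_le hl) => n /hA ->.
have [N h] := hl _ A0; set n := maxn N N0.
have a1 := h n (leq_maxl _ _); have a2 := hA n (leq_maxr _ _).
rewrite leNgt; apply/negP => hlt.
have e : u n = (u n - l) + l by ring.
have : abs (u n) < A by rewrite e; apply: absDlt.
by rewrite a2 ltxx.
Qed.

Lemma cvg_close u v l : cvg u l ->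
  (forall eps, 0 < eps -> exists N, forall n, (N <= n)%N -> abs (v n - u n) < eps) -> cvg v l.
Proof.
move=> hu hv eps e0; have [N1 h1] := hu _ e0; have [N2 h2] := hv _ e0.
exists (maxn N1 N2) => n hn.
have e : v n - l = (v n - u n) + (u n - l) by ring.
rewrite e; apply: absDlt; [apply: h2|apply: h1]; apply: leq_trans hn; by rewrite ?leq_maxl ?leq_maxr.
Qed.

Lemma cvg_const (c : C) : cvg (fun _ => c) c.
Proof. by move=> eps e0; exists 0%N => n _; rewrite subrr abs0. Qed.

Lemma cvgD u v l m : cvg u l -> cvg v m -> cvg (fun n => u n + v n) (l + m).
Proof.
move=> hu hv eps e0; have [N1 h1] := hu _ e0; have [N2 h2] := hv _ e0.
exists (maxn N1 N2) => n hn.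
have e : u n + v n - (l + m) = (u n - l) + (v n - m) by ring.
rewrite e; apply: absDlt; [apply: h1|apply: h2]; apply: leq_trans hn; by rewrite ?leq_maxl ?leq_maxr.
Qed.

Lemma cvgMl (c : C) u l : cvg u l -> cvg (fun n => c * u n) (c * l).
Proof.
move=> hu eps e0.
have c1 : 0 < abs c + 1 by have := abs_ge0 c; lra.
have e1 : 0 < eps / (abs c + 1) by apply: divr_gt0.
have [N h] := hu _ e1; exists N => n hn.
rewrite -mulrBr absM.
have h' := h n hn.
have hc := abs_ge0 c.
apply: le_lt_trans (_ : abs c * (eps / (abs c + 1)) < eps).
  by apply: ler_wpM2l => //; apply: ltW.
rewrite mulrA ltr_pdivrMr //; nra.
Qed.

Lemma cvg_ext u v l : (forall n, u n = v n) -> cvg u l -> cvg v l.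
Proof. by move=> e hu eps e0; have [N h] := hu _ e0; exists N => n hn; rewrite -e; apply: h. Qed.

Lemma cvg_sum (I : Type) (s : seq I) (U : I -> nat -> C) (L : I -> C) :
  (forall i, cvg (U i) (L i)) -> cvg (fun n => \sum_(i <- s) U i n) (\sum_(i <- s) L i).
Proof.
move=> h; elim: s => [|x s IH].
  by apply: (@cvg_ext (fun _ => 0)); [move=> n; rewrite big_nil|rewrite big_nil; apply: cvg_const].
apply: (@cvg_ext (fun n => U x n + \sum_(i <- s) U i n)); first by move=> n; rewrite big_cons.
rewrite big_cons; exact: cvgD.
Qed.
Definition Wn (N : nat) : seq int := [seq (i%:Z - N%:Z) | i <- iota 0 N.*2.+1].

Lemma mem_W n N : (n \in Wn N) = (`|n| <= N)%N.
Proof.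
apply/mapP/idP.
  by move=> [i]; rewrite mem_iota /= => hi ->; lia.
move=> h; exists (absz (n + N%:Z)); last by lia.
rewrite mem_iota /=; lia.
Qed.

Lemma uniq_W N : uniq (Wn N).
Proof.
rewrite map_inj_uniq ?iota_uniq // => i j /eqP; rewrite (inj_eq (addIr _)) => /eqP [] //.
Qed.

Lemma sum_W (a : int -> C) N :
  \sum_(0 <= k < N.*2.+1) a (k%:Z - N%:Z) = \sum_(n <- Wn N) a n.
Proof. by rewrite /index_iota subn0 big_map. Qed.

Lemma sum_window (S : seq int) M (b : int -> C) : uniq S ->
  (forall n, (`|n| <= M)%N -> n \in S) ->
  \sum_(n <- S) b n = \sum_(n <- Wn M) b n + \sum_(n <- S | (M < `|n|)%N) b n.
Proof.
move=> uS hS; rewrite (bigID (fun n => (`|n| <= M)%N)) /=.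
congr (_ + _); last by apply: eq_bigl => n; rewrite ltnNge.
rewrite -big_filter; apply: perm_big; apply: uniq_perm.
- by rewrite filter_uniq.
- exact: uniq_W.
move=> n; rewrite mem_filter mem_W; case h: (`|n| <= M)%N => //=.
exact: hS.
Qed.

Lemma sum_sub_supp (s t : seq int) (b : int -> C) : uniq s -> uniq t ->
  {subset s <= t} -> (forall n, n \in t -> n \notin s -> b n = 0) ->
  \sum_(n <- t) b n = \sum_(n <- s) b n.
Proof.
move=> us ut sst hb; rewrite (bigID (fun n => n \in s)) /=.
rewrite [X in _ + X]big1_seq ?addr0; last first.
  by move=> n /andP [hn ht]; apply: hb.
rewrite -big_filter; apply: perm_big; apply: uniq_perm => //.
- by rewrite filter_uniq.
move=> n; rewrite mem_filter; case h: (n \in s); rewrite ?andbT ?andbF //=.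
exact: sst.
Qed.

Definition null (a : int -> C) := forall eps, 0 < eps ->
  exists N : nat, forall n : int, (N < `|n|)%N -> abs (a n) < eps.

Definition psum (a : int -> C) (y : C) (N : nat) := \sum_(n <- Wn N) a n * y ^ n.

Lemma eval_psum a y l : laurent_eval_to abs a y l <-> cvg (psum a y) l.
Proof.
rewrite /laurent_eval_to /two_sided_sum_to.
have e : forall n, \sum_(0 <= k < n.*2.+1) a (k%:Z - n%:Z) * y ^ (k%:Z - n%:Z) = psum a y n.
  by move=> n; rewrite /psum -(sum_W (fun n => a n * y ^ n)).
by split; apply: cvg_ext => n; rewrite e.
Qed.

Lemma psum_diff a y M N : (M <= N)%N ->
  psum a y N = psum a y M + \sum_(n <- Wn N | (M < `|n|)%N) a n * y ^ n.
Proof.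
move=> hMN; rewrite /psum (@sum_window (Wn N) M (fun n => a n * y ^ n) (uniq_W N)) // => n hn.
rewrite mem_W; exact: leq_trans hn hMN.
Qed.

Hypothesis complete : forall u, cauchy_seq abs u -> exists l, cvg u l.

Lemma ev_exists a y : null a -> abs y = 1 -> exists l, cvg (psum a y) l.
Proof.
move=> na y1; apply: complete => eps e0; have [N hN] := na _ e0.
have key : forall m n, (N <= m)%N -> (m <= n)%N -> abs (psum a y m - psum a y n) < eps.
  move=> m n hm' hmn; rewrite (psum_diff a y hmn) opprD addrA subrr sub0r absN.
  apply: abs_sum_lt => // k hk; rewrite absM absXz1 // mulr1; apply: hN.
  exact: leq_ltn_trans hm' hk.
exists N => m n hm hn.
case: (leqP m n) => h; first exact: key.
by rewrite absB; apply: key => //; apply: ltnW.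
Qed.

Definition ev (a : int -> C) (y : C) : C :=
  ClassicalEpsilon.epsilon (inhabits 0) (fun l => cvg (psum a y) l).

Lemma ev_spec a y : null a -> abs y = 1 -> cvg (psum a y) (ev a y).
Proof. move=> na y1; exact: ClassicalEpsilon.epsilon_spec (ev_exists na y1). Qed.

Lemma ev_eq a y l : null a -> abs y = 1 -> cvg (psum a y) l -> ev a y = l.
Proof. move=> na y1 hl; exact: cvg_unique (ev_spec na y1) hl. Qed.

Lemma ev_le a y B : null a -> abs y = 1 -> (forall n, abs (a n) <= B) -> abs (ev a y) <= B.
Proof.
move=> na y1 hB; apply: (cvg_le (N0 := 0%N) (ev_spec na y1)) => N _.
have B0 : 0 <= B := le_trans (abs_ge0 _) (hB 0).
by apply: abs_sum_le => // n _; rewrite absM absXz1 // mulr1.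
Qed.

Lemma ev_tail a y M B : null a -> abs y = 1 -> 0 <= B ->
  (forall n, (M < `|n|)%N -> abs (a n) <= B) -> abs (ev a y - psum a y M) <= B.
Proof.
move=> na y1 B0 hB.
have hc := cvgD (ev_spec na y1) (cvg_const (- psum a y M)).
apply: (cvg_le (N0 := M) hc) => N hN.
rewrite (psum_diff a y hN) addrC addKr.
by apply: abs_sum_le => // n hn; rewrite absM absXz1 // mulr1; apply: hB.
Qed.
Lemma null_sub a b : null a -> null b -> null (fun n => a n - b n).
Proof.
move=> na nb eps e0; have [N1 h1] := na _ e0; have [N2 h2] := nb _ e0.
exists (maxn N1 N2) => n hn; apply: absBlt; [apply: h1|apply: h2]; lia.
Qed.

Lemma null_fin a M : (forall n, (M < `|n|)%N -> a n = 0) -> null a.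
Proof. move=> h eps e0; exists M => n hn; by rewrite h // abs0. Qed.



Lemma cvgB u v l m : cvg u l -> cvg v m -> cvg (fun n => u n - v n) (l - m).
Proof.
move=> hu hv; have h := cvgD hu (cvgMl (-1) hv); rewrite mulN1r in h.
by apply: (cvg_ext _ h) => n; rewrite mulN1r.
Qed.

Lemma ev_sub a b y : null a -> null b -> abs y = 1 ->
  ev (fun n => a n - b n) y = ev a y - ev b y.
Proof.
move=> na nb y1; apply: ev_eq => //; first exact: null_sub.
apply: (cvg_ext _ (cvgB (ev_spec na y1) (ev_spec nb y1))) => N.
by rewrite /psum -sumrB; apply: eq_bigr => n _; rewrite mulrBl.
Qed.

Lemma ev_fin a y M : abs y = 1 -> (forall n, (M < `|n|)%N -> a n = 0) -> ev a y = psum a y M.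
Proof.
move=> y1 h; apply: ev_eq => //; first exact: null_fin h.
move=> eps e0; exists M => N hN; rewrite (psum_diff a y hN) addrC addKr.
by rewrite big1 ?abs0 // => n hn; rewrite h // mul0r.
Qed.

Lemma ev_mono (m : int) c y : abs y = 1 ->
  ev (fun n => if n == m then c else 0) y = c * y ^ m.
Proof.
move=> y1; rewrite (@ev_fin _ _ `|m|%N) //; last first.
  by move=> n hn; case: eqP => // e; move: hn; rewrite e ltnn.
rewrite /psum (bigD1_seq m) ?uniq_W ?mem_W //= eqxx big1 ?addr0 // => n /negPf ->.
by rewrite mul0r.
Qed.

Lemma absXX1 (y z : C) (n : nat) : abs y = 1 -> abs z = 1 ->
  abs (y ^+ n - z ^+ n) <= abs (y - z).
Proof.
move=> y1 z1; rewrite subrXX absM.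
have h : abs (\sum_(i < n) y ^+ (n.-1 - i) * z ^+ i) <= 1.
  apply: abs_sum_le => // i _; by rewrite absM !absX y1 z1 !expr1n mulr1.
by apply: le_trans (ler_wpM2l (abs_ge0 _) h) _; rewrite mulr1.
Qed.

Lemma absXzX1 (y z : C) (n : int) : abs y = 1 -> abs z = 1 ->
  abs (y ^ n - z ^ n) <= abs (y - z).
Proof.
move=> y1 z1; case: n => n /=; first exact: absXX1.
have yn0 : y ^+ n.+1 != 0 by apply/eqP => /(congr1 abs); rewrite abs0 absX y1 expr1n; apply/eqP; rewrite oner_eq0.
have zn0 : z ^+ n.+1 != 0 by apply/eqP => /(congr1 abs); rewrite abs0 absX z1 expr1n; apply/eqP; rewrite oner_eq0.
have e : (y ^+ n.+1)^-1 - (z ^+ n.+1)^-1 = (z ^+ n.+1 - y ^+ n.+1) * ((y ^+ n.+1)^-1 * (z ^+ n.+1)^-1).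
  move: yn0 zn0; move: (y ^+ n.+1) (z ^+ n.+1) => Y Z hY hZ; field; by rewrite hY hZ.
rewrite e absM absM !absV !absX y1 z1 !expr1n invr1 !mulr1 absB; exact: absXX1.
Qed.

Lemma ev_lip a y z : null a -> abs y = 1 -> abs z = 1 -> (forall n, abs (a n) <= 1) ->
  abs (ev a y - ev a z) <= abs (y - z).
Proof.
move=> na y1 z1 a1.
apply: (cvg_le (N0 := 0%N) (cvgB (ev_spec na y1) (ev_spec na z1))) => N _.
rewrite /psum -sumrB; apply: abs_sum_le => // n _; rewrite -mulrBr absM.
apply: le_trans (ler_wpM2r (abs_ge0 _) (a1 n)) _; rewrite mul1r; exact: absXzX1.
Qed.
Lemma wsum_diff (F : int -> C) M N : (M <= N)%N ->
  \sum_(n <- Wn N) F n = \sum_(n <- Wn M) F n + \sum_(n <- Wn N | (M < `|n|)%N) F n.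
Proof.
move=> hMN; rewrite (@sum_window (Wn N) M F (uniq_W N)) // => n hn.
rewrite mem_W; exact: leq_trans hn hMN.
Qed.

Lemma null_bounded a : null a -> exists B, 0 <= B /\ forall n, abs (a n) <= B.
Proof.
move=> na; have [N h] := na 1 ltr01.
have s0 : 0 <= \sum_(k <- Wn N) abs (a k) by apply: sumr_ge0 => k _.
exists (1 + \sum_(k <- Wn N) abs (a k)); split; first by lra.
move=> n; case: (leqP (`|n|)%N N) => hn.
  rewrite (bigD1_seq n) ?uniq_W ?mem_W //=.
  have : 0 <= \sum_(i <- Wn N | i != n) abs (a i) by apply: sumr_ge0.
  lra.
have := h n hn; lra.
Qed.

Lemma mul_cvgW g h r : laurent_mul_to abs g h r ->
  forall n, cvg (fun K => \sum_(k <- Wn K) g k * h (n - k)) (r n).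
Proof.
move=> hm n; have := hm n; rewrite /two_sided_sum_to; apply: cvg_ext => K.
by rewrite -(sum_W (fun k => g k * h (n - k))).
Qed.

Lemma prod_small x z Bx B eta : abs x <= Bx -> abs z < eta -> Bx <= B -> 0 < eta ->
  abs (x * z) <= eta * B.
Proof.
move=> hx hz hB he; rewrite absM.
have := abs_ge0 x; have := abs_ge0 z; nra.
Qed.

Lemma mul_ev g h r y : null g -> null h -> abs y = 1 -> laurent_mul_to abs g h r ->
  null r /\ ev r y = ev g y * ev h y.
Proof.
move=> ng nh y1 hm; have hc := mul_cvgW hm.
have [Bg [Bg0 hBg]] := null_bounded ng; have [Bh [Bh0 hBh]] := null_bounded nh.
set B := Bg + Bh + 1.
have B0 : 0 < B by rewrite /B; lra.
have thr : forall eps, 0 < eps -> exists Ng Nh eta, [/\ 0 < eta, eta * B = eps / 2,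
    forall k, (Ng < `|k|)%N -> abs (g k) < eta &
    forall k, (Nh < `|k|)%N -> abs (h k) < eta].
  move=> eps e0; set eta := eps / 2 / B.
  have eta0 : 0 < eta by rewrite /eta; apply: divr_gt0 => //; lra.
  have [Ng hg] := ng _ eta0; have [Nh hh] := nh _ eta0.
  exists Ng, Nh, eta; split => //.
  by rewrite /eta mulrAC -mulrA mulfV ?mulr1 //; apply/eqP; lra.
have nr : null r.
  move=> eps e0; have [Ng [Nh [eta [eta0 etaB hg hh]]]] := thr _ e0.
  exists (Ng + Nh)%N => n hn.
  apply: (@le_lt_trans _ _ (eps / 2)); last by lra.
  apply: (cvg_le (N0 := 0%N) (hc n)) => K _.
  have e20 : 0 <= eps / 2 by lra.
  apply: abs_sum_le => // k _; rewrite -etaB.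
  case: (leqP (`|k|)%N Ng) => hk.
    apply: (prod_small (hBg k)) => //; first by apply: hh; lia.
    by rewrite /B; lra.
  rewrite mulrC; apply: (prod_small (hBh _)) => //; first exact: hg.
  by rewrite /B; lra.
split => //.
apply: ev_eq => //.
have hGH : cvg (fun N => psum g y N * ev h y) (ev g y * ev h y).
  have := cvgMl (ev h y) (ev_spec ng y1).
  by rewrite mulrC; apply: cvg_ext => N; rewrite mulrC.
apply: (cvg_close hGH) => eps e0.
have [Ng [Nh [eta [eta0 etaB hg hh]]]] := thr _ e0.
exists (Ng + Nh)%N => N hN.
set H := ev h y.
have e20 : 0 <= eps / 2 by lra.
have yu : y \is a GRing.unit.
  by rewrite unitfE; apply/eqP => y0; move: y1; rewrite y0 abs0; apply/eqP; rewrite eq_sym oner_eq0.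
have herr : forall n, abs (r n - \sum_(k <- Wn N) g k * h (n - k)) <= eps / 2.
  move=> n; have hc' := cvgB (hc n) (cvg_const (\sum_(k <- Wn N) g k * h (n - k))).
  apply: (cvg_le (N0 := N) hc') => K hK.
  rewrite (@wsum_diff (fun k => g k * h (n - k)) _ _ hK) addrC addKr.
  apply: abs_sum_le => // k hk; rewrite -etaB mulrC; apply: (prod_small (hBh _)) => //.
    by apply: hg; lia.
  by rewrite /B; lra.
set I := fun k => \sum_(n <- Wn N) h (n - k) * y ^ (n - k).
have e2 : \sum_(k <- Wn N) g k * y ^ k * I k =
    \sum_(n <- Wn N) (\sum_(k <- Wn N) g k * h (n - k)) * y ^ n.
  under [RHS]eq_bigr do rewrite mulr_suml.
  rewrite exchange_big /=; apply: eq_bigr => k _; rewrite /I mulr_sumr.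
  apply: eq_bigr => n _.
  have -> : y ^ n = y ^ k * y ^ (n - k) by rewrite -exprzDr // addrC subrK.
  ring.
have e3 : psum r y N - psum g y N * H =
    \sum_(n <- Wn N) (r n - \sum_(k <- Wn N) g k * h (n - k)) * y ^ n +
    \sum_(k <- Wn N) g k * y ^ k * (I k - H).
  have -> : \sum_(k <- Wn N) g k * y ^ k * (I k - H) =
     \sum_(k <- Wn N) g k * y ^ k * I k - psum g y N * H.
    by rewrite /psum mulr_suml -sumrB; apply: eq_bigr => k _; ring.
  rewrite e2 /psum addrA -big_split /=; congr (_ + _); apply: eq_bigr => n _; by rewrite -mulrDl subrK.
have hI : forall k, (`|k| <= Ng)%N -> abs (I k - H) <= eta.
  move=> k hk; set M := (N - Ng)%N.
  have -> : I k = \sum_(j <- [seq n - k | n <- Wn N]) h j * y ^ j by rewrite [RHS]big_map.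
  rewrite (@sum_window _ M (fun j => h j * y ^ j)); first last.
  - move=> j hj; apply/mapP; exists (j + k); last by rewrite addrK.
    by rewrite mem_W; rewrite /M in hj; lia.
  - by rewrite map_inj_uniq ?uniq_W // => a b /addIr.
  have hM : forall j, (M < `|j|)%N -> abs (h j) <= eta.
    by move=> j hj; apply: ltW; apply: hh; rewrite /M in hj; lia.
  have -> : \sum_(n <- Wn M) h n * y ^ n + \sum_(n <- [seq n - k | n <- Wn N] | (M < `|n|)%N) h n * y ^ n - H
      = \sum_(n <- [seq n - k | n <- Wn N] | (M < `|n|)%N) h n * y ^ n - (H - psum h y M) by rewrite /psum; ring.
  apply: absBle; last by apply: ev_tail => //; apply: ltW.
  by apply: abs_sum_le; [apply: ltW | move=> j hj; rewrite absM absXz1 // mulr1; apply: hM].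
rewrite e3; apply: (@le_lt_trans _ _ (eps / 2)); last by lra.
apply: absDle.
  by apply: abs_sum_le => // n _; rewrite absM absXz1 // mulr1.
apply: abs_sum_le => // k _; rewrite absM absM absXz1 // mulr1 -etaB.
have hIk : abs (I k - H) <= Bh.
  apply: absBle; last by apply: ev_le.
  by apply: abs_sum_le => // n _; rewrite absM absXz1 // mulr1.
have := abs_ge0 (g k); have := abs_ge0 (I k - H); have := hBg k.
case: (leqP (`|k|)%N Ng) => hk.
  have := hI k hk; rewrite /B; nra.
have := hg k hk; rewrite /B; nra.
Qed.
Lemma pow_ev f k s y : null f -> abs y = 1 -> laurent_pow_to abs f k s ->
  null s /\ ev s y = ev f y ^+ k.
Proof.
move=> nf y1; elim: k s => [|k IH] s /=.
  move=> hs; have -> : s = (fun n => if n == 0 then 1 else 0).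
    by apply: FunctionalExtensionality.functional_extensionality => n; rewrite hs; case: eqP.
  split; last by rewrite ev_mono // mul1r expr0 expr0z.
  by apply: (null_fin (M := 0%N)) => n hn; case: eqP => // e; move: hn; rewrite e.
move=> [s' [hs' hm]]; have [ns' es'] := IH _ hs'.
have [ns es] := mul_ev ns' nf y1 hm; split => //.
by rewrite es es' exprSr.
Qed.

Lemma psum0 a y : psum a y 0 = a 0.
Proof. by rewrite /psum /Wn /= big_cons big_nil addr0 expr0z mulr1. Qed.

Lemma psumS a y N : psum a y N.+1 =
  psum a y N + (a N.+1%:Z * y ^ N.+1%:Z + a (- N.+1%:Z) * y ^ (- N.+1%:Z)).
Proof.
rewrite (psum_diff a y (leqnSn N)); congr (_ + _).
rewrite -big_filter.
have pe : perm_eq [seq n <- Wn N.+1 | (N < `|n|)%N] [:: N.+1%:Z; - N.+1%:Z].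
  apply: uniq_perm; first by rewrite filter_uniq ?uniq_W.
    by [].
  move=> n; rewrite mem_filter mem_W !inE; apply/idP/idP.
    by move=> /andP [h1 h2]; apply/orP; case: (ltrP 0 n) => h; [left|right]; apply/eqP; lia.
  by move=> /orP [] /eqP ->; apply/andP; split; lia.
by rewrite (perm_big _ pe) /= big_cons big_cons big_nil addr0.
Qed.

Lemma subst_term (f : int -> C) (y : C) q (t : int) : (0 < q)%N ->
  laurent_subst_pow q f (q%:Z * t) * y ^ (q%:Z * t) = f t * (y ^+ q) ^ t.
Proof.
move=> q0; rewrite /laurent_subst_pow dvdz_mulr ?dvdzz // mulKz; last by rewrite eqz_nat -lt0n.
by rewrite -exprz_exp.
Qed.

Lemma subst_zero (f : int -> C) (y : C) q (n : int) : ~~ (q%:Z %| n)%Z ->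
  laurent_subst_pow q f n * y ^ n = 0.
Proof. by move=> h; rewrite /laurent_subst_pow (negPf h) mul0r. Qed.

Lemma subst_psum (f : int -> C) (y : C) q N : (0 < q)%N ->
  psum (laurent_subst_pow q f) y N = psum f (y ^+ q) (N %/ q).
Proof.
move=> q0; elim: N => [|N IH].
  by rewrite div0n !psum0 /laurent_subst_pow dvdz0 div0z.
rewrite psumS IH divnS //.
case: (boolP (q %| N.+1)%N) => hd /=.
  have [t ht] : exists t, N.+1 = (q * t)%N by exists (N.+1 %/ q)%N; rewrite mulnC divnK.
  have tq : t = (N %/ q)%N.+1.
    have := divnS N q0; rewrite hd ht mulKn //; lia.
  rewrite add1n psumS -tq; congr (_ + _).
  have e1 : N.+1%:Z = q%:Z * t%:Z by rewrite ht PoszM.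
  have e2 : - N.+1%:Z = q%:Z * (- t%:Z) by rewrite e1 mulrN.
  by rewrite e2 e1 !subst_term.
by rewrite add0n !subst_zero ?addr0 // dvdzE ?abszN.
Qed.

Lemma frob f q y : null f -> abs y = 1 -> (0 < q)%N ->
  laurent_pow_to abs f q (laurent_subst_pow q f) -> ev f y ^+ q = ev f (y ^+ q).
Proof.
move=> nf y1 q0 hp; have [ns es] := pow_ev nf y1 hp.
rewrite -es; apply: ev_eq => //.
have yq1 : abs (y ^+ q) = 1 by rewrite absX y1 expr1n.
have hs := ev_spec nf yq1.
move=> eps e0; have [N hN] := hs _ e0; exists (N * q)%N => n hn.
rewrite subst_psum //; apply: hN; by rewrite leq_divRL.
Qed.

Lemma frob_iter f q y n : null f -> abs y = 1 -> (0 < q)%N ->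
  laurent_pow_to abs f q (laurent_subst_pow q f) ->
  ev f y ^+ (q ^ n) = ev f (y ^+ (q ^ n)).
Proof.
move=> nf y1 q0 hp; elim: n y y1 => [|n IH] y y1; first by rewrite !expn0 !expr1.
rewrite expnS !exprM frob // IH //; by rewrite absX y1 expr1n.
Qed.
Hypothesis closedC : GRing.closed_field_axiom C.
Definition CC : Type := C.
HB.instance Definition _ := GRing.Field.on CC.
HB.instance Definition _ := Field_isAlgClosed.Build CC closedC.

Lemma factor (P : {poly C}) : exists rs : seq C, P = lead_coef P *: \prod_(z <- rs) ('X - z%:P).
Proof. have [r Hr] := @closed_field_poly_normal CC P. by exists r. Qed.

Lemma nth_root (n : nat) (c : C) : (0 < n)%N -> exists y, y ^+ n = c.
Proof.
case: n => // n n0; have [x hx] := closedC (fun i => if i == 0%N then c else 0) n0.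
exists x; rewrite hx big_ord_recl /= expr0 mulr1 big1 ?addr0 // => i _; by rewrite mul0r.
Qed.

Lemma unit_abs1 (x : C) n : (0 < n)%N -> x ^+ n = 1 -> abs x = 1.
Proof.
move=> n0 h; have := congr1 abs h; rewrite absX abs1 => /eqP.
by rewrite pexpr_eq1 // => /eqP.
Qed.

Lemma prim_exists (Q : nat) : (0 < Q)%N -> (Q%:R : C) != 0 ->
  exists xi : C, Q.-primitive_root xi.
Proof.
move=> Q0 QR; have [rs hrs] := factor ('X^Q - 1).
have lc : lead_coef ('X^Q - 1 : {poly C}) = 1 by rewrite -polyC1 lead_coefXnsubC.
rewrite lc scale1r in hrs.
have szs : size rs = Q.
  by have := size_Xn_sub_1 C Q0; rewrite hrs size_prod_XsubC => -[].
have ur : uniq rs.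
  rewrite -separable_prod_XsubC -hrs unlock.
  apply/Bezout_coprimepP; exists (- 1, (Q%:R)^-1 *: 'X); rewrite /=.
  rewrite derivB derivXn derivC subr0.
  have -> : (Q%:R^-1 *: 'X) * ('X^(Q.-1) *+ Q) = ('X^Q : {poly C}).
    rewrite -scalerAl mulrnAr -exprS prednK // -scaler_nat scalerA mulVf //.
    by rewrite scale1r.
  by rewrite mulN1r opprB subrK eqpxx.
have ar : all Q.-unity_root rs.
  apply/allP => z hz; rewrite unity_rootE; apply/eqP.
  have : root ('X^Q - 1) z by rewrite hrs root_prod_XsubC.
  by rewrite /root !hornerE subr_eq0 => /eqP.
have := has_prim_root Q0 ar ur; rewrite szs leqnn => /(_ isT) /hasP [xi _ hxi].
by exists xi.
Qed.

Lemma prim_pow_ne1 (Q : nat) (xi : C) (k : int) : Q.-primitive_root xi ->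
  ~~ (Q%:Z %| k)%Z -> xi ^ k != 1.
Proof.
move=> hp hk; apply/eqP => e; move: hk; rewrite dvdzE /=; apply/negP/negPn.
case: k e => n /= e; rewrite (prim_order_dvd hp); apply/eqP; first exact: e.
by move: e; move/(congr1 (fun x => x^-1)); rewrite invrK invr1.
Qed.

Lemma powsum (Q : nat) (xi : C) (k : int) : Q.-primitive_root xi ->
  \sum_(i < Q) (xi ^+ i) ^ k = if (Q%:Z %| k)%Z then Q%:R else 0.
Proof.
move=> hp; have xQ := prim_expr_order hp.
have e : forall i : nat, (xi ^+ i) ^ k = (xi ^ k) ^+ i.
  by move=> i; rewrite (_ : xi ^+ i = xi ^ i%:Z) // exprzAC.
under eq_bigr do rewrite e.
have zQ : (xi ^ k) ^+ Q = 1.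
  have -> : (xi ^ k) ^+ Q = (xi ^ k) ^ Q%:Z by [].
  by rewrite exprzAC (_ : xi ^ Q%:Z = xi ^+ Q) // xQ exp1rz.
case: ifP => hd.
  have -> : xi ^ k = 1.
    by move/dvdzP: hd => [t ->]; rewrite -exprz_exp exprzAC (_ : xi ^ Q%:Z = xi ^+ Q) // xQ exp1rz.
  by rewrite (eq_bigr (fun _ => 1)) ?sumr_const ?card_ord // => i _; rewrite expr1n.
have ne := prim_pow_ne1 hp (negbT hd).
have : (xi ^ k - 1) * \sum_(i < Q) (xi ^ k) ^+ i = 0 by rewrite -subrX1 zQ subrr.
by move/eqP; rewrite mulf_eq0 subr_eq0 (negPf ne) /= => /eqP.
Qed.
Lemma seq_max (g : int -> C) (s : seq int) : s != [::] ->
  exists2 j, j \in s & forall n, n \in s -> abs (g n) <= abs (g j).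
Proof.
elim: s => [//|x s IH] _.
case: (eqVneq s [::]) => [->|ne].
  by exists x; rewrite ?mem_head // => n; rewrite inE => /eqP ->.
have [j js hj] := IH ne.
case: (leP (abs (g x)) (abs (g j))) => h.
  exists j; first by rewrite inE js orbT.
  by move=> n; rewrite inE => /orP [/eqP ->|/hj].
exists x; first exact: mem_head.
move=> n; rewrite inE => /orP [/eqP ->//|/hj h2]; apply: le_trans h2 _; exact: ltW.
Qed.

Lemma max_index g : null g -> exists j, forall n, abs (g n) <= abs (g j).
Proof.
move=> ng; case: (Classical_Prop.classic (exists n0, g n0 != 0)) => [[n0 hn0]|hno].
  have [K hK] := ng _ (abs_neq0 hn0).
  have WK : Wn K != [::] by apply/eqP => e; have := mem_W 0 K; rewrite e.
  have [j _ hj] := @seq_max g (Wn K) WK.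
  exists j => n; case: (leqP (`|n|)%N K) => hn; first by apply: hj; rewrite mem_W.
  have hn0K : (`|n0| <= K)%N.
    by rewrite leqNgt; apply/negP => /hK; rewrite ltxx.
  apply: ltW; apply: lt_le_trans (hK _ hn) _; apply: hj; by rewrite mem_W.
exists 0 => n; have -> : g n = 0.
  by apply/eqP; apply/negP => /negP h; apply: hno; exists n.
by rewrite abs0.
Qed.

Lemma trace (g : int -> C) (y0 xi : C) (Q : nat) (j : int) : null g -> abs y0 = 1 ->
  Q.-primitive_root xi -> (Q%:R : C) != 0 -> g j != 0 ->
  (forall n, n != j -> (Q%:Z %| n - j)%Z -> abs (g n) < abs (g j)) ->
  abs (\sum_(i < Q) ev g (y0 * xi ^+ i) * (y0 * xi ^+ i) ^ (- j)) = abs (Q%:R : C) * abs (g j).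
Proof.
move=> ng y01 hp QR gj0 hcl.
have Q0 := prim_order_gt0 hp.
have xi1 : abs xi = 1 := unit_abs1 Q0 (prim_expr_order hp).
have yi1 : forall i : nat, abs (y0 * xi ^+ i) = 1 by move=> i; rewrite absM absX xi1 expr1n y01 mulr1.
have unit1 : forall x : C, abs x = 1 -> x \is a GRing.unit.
  by move=> x h; rewrite unitfE; apply/eqP => x0; move: h; rewrite x0 abs0; apply/eqP; rewrite eq_sym oner_eq0.
have hc : cvg (fun N => \sum_(i < Q) psum g (y0 * xi ^+ i) N * (y0 * xi ^+ i) ^ (- j))
              (\sum_(i < Q) ev g (y0 * xi ^+ i) * (y0 * xi ^+ i) ^ (- j)).
  apply: cvg_sum => i; have h := cvgMl ((y0 * xi ^+ i) ^ (- j)) (ev_spec ng (yi1 i)).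
  rewrite [_ * ev _ _]mulrC in h; apply: (cvg_ext _ h) => N; exact: mulrC.
have e : forall N, \sum_(i < Q) psum g (y0 * xi ^+ i) N * (y0 * xi ^+ i) ^ (- j) =
    Q%:R * \sum_(n <- Wn N | (Q%:Z %| n - j)%Z) g n * y0 ^ (n - j).
  move=> N; rewrite /psum.
  under eq_bigr do rewrite mulr_suml.
  rewrite exchange_big /= mulr_sumr [RHS]big_mkcond; apply: eq_bigr => n _.
  have -> : \sum_(i < Q) g n * (y0 * xi ^+ i) ^ n * (y0 * xi ^+ i) ^ (- j) =
      g n * y0 ^ (n - j) * \sum_(i < Q) (xi ^+ i) ^ (n - j).
    rewrite mulr_sumr; apply: eq_bigr => i _.
    rewrite -mulrA -exprzDr ?unit1 ?yi1 // exprzMl ?unit1 ?yi1 ?y01 ?absX ?xi1 ?expr1n //.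
    by rewrite mulrA.
  rewrite powsum //; case: ifP => _; last by rewrite mulr0.
  by rewrite mulrC.
apply: (cvg_eq_norm (N0 := `|j|%N) _ hc).
  by apply: mulr_gt0; apply: abs_neq0.
move=> N hN; rewrite e absM; congr (_ * _).
rewrite -big_filter.
have jin : j \in filter (fun n => (Q%:Z %| n - j)%Z) (Wn N) by rewrite (@mem_filter int) /= subrr dvdz0 mem_W.
rewrite (bigD1_seq j jin) ?filter_uniq ?uniq_W // subrr expr0z mulr1.
apply: absD_eq; rewrite big_seq_cond; apply: abs_sum_lt; first exact: abs_neq0.
move=> n /andP [hn nj]; rewrite (@mem_filter int) in hn; case/andP: hn => hd _.
by rewrite absM absXz1 // mulr1; apply: hcl.
Qed.

Variable p : nat.
Hypothesis pprime : prime p.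
Hypothesis absp : abs (p%:R) = (p%:R)^-1.

Lemma absp_lt1 : abs (p%:R : C) < 1.
Proof.
rewrite absp; have p1 : (1 < p)%N := prime_gt1 pprime.
rewrite invf_lt1; last by rewrite ltr0n; lia.
by rewrite ltr1n.
Qed.

Lemma abs_1p (m : nat) : abs ((1 + p * m)%N%:R : C) = 1.
Proof.
rewrite natrD natrM (_ : (1%:R : C) = 1) // -[RHS]abs1; apply: absD_eq; rewrite abs1 absM.
apply: le_lt_trans absp_lt1; have := abs_nat_le1 m; have := abs_ge0 (p%:R : C).
have := abs_ge0 (m%:R : C); nra.
Qed.

Lemma maxmod g : null g -> exists j, (forall n, abs (g n) <= abs (g j)) /\
  exists y, abs y = 1 /\ abs (g j) <= abs (ev g y).
Proof.
move=> ng; have [j hj] := max_index ng; exists j; split => //.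
case: (eqVneq (g j) 0) => [->|gj0].
  by exists 1; rewrite abs1 abs0; split => //.
have [K hK] := ng _ (abs_neq0 gj0).
have hjK : (`|j| <= K)%N by rewrite leqNgt; apply/negP => /hK; rewrite ltxx.
set Q := (1 + p * (2 * K + 1))%N.
have p1 : (1 < p)%N := prime_gt1 pprime.
have QR : abs (Q%:R : C) = 1 by rewrite /Q abs_1p.
have QR0 : (Q%:R : C) != 0 by apply/eqP => e; move: QR; rewrite e abs0; apply/eqP; rewrite eq_sym oner_eq0.
have Q0 : (0 < Q)%N by rewrite /Q; lia.
have [xi hp] := prim_exists Q0 QR0.
have hQK : (2 * K + 1 < Q)%N by rewrite /Q; nia.
have hcl : forall n, n != j -> (Q%:Z %| n - j)%Z -> abs (g n) < abs (g j).
  move=> n nj /dvdzP [t ht]; apply: hK.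
  have t0 : t != 0 by apply/eqP => t0; move: ht; rewrite t0 mul0r => /eqP; rewrite subr_eq0 (negPf nj).
  have : (Q <= `|n - j|)%N.
    rewrite ht abszM /=; apply: leq_pmull; by rewrite absz_gt0.
  lia.
have := trace ng abs1 hp QR0 gj0 hcl; rewrite QR mul1r.
case: (boolP [exists i : 'I_Q, abs (g j) <= abs (ev g (1 * xi ^+ i))]).
  move=> /existsP [i hi] _; exists (1 * xi ^+ i); split => //.
  by rewrite absM abs1 absX (unit_abs1 (prim_order_gt0 hp) (prim_expr_order hp)) expr1n mulr1.
move=> /existsPn hn e; have : abs (g j) < abs (g j).
  rewrite -{1}e; apply: abs_sum_lt; first exact: abs_neq0.
  move=> i _; rewrite absM absXz1; last first.
    by rewrite absM abs1 absX (unit_abs1 (prim_order_gt0 hp) (prim_expr_order hp)) expr1n mulr1.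
  by rewrite mulr1 ltNge hn.
by rewrite ltxx.
Qed.
Definition gfun (t : R) := Num.max (abs (p%:R : C) * t) (t ^+ p).

Lemma gfun_le t : 0 <= t -> t <= 1 -> gfun t <= t.
Proof.
move=> t0 t1; rewrite /gfun ge_max; apply/andP; split.
  have := absp_lt1; have := abs_ge0 (p%:R : C); nra.
by apply: ler_iXnr => //; apply: prime_gt0.
Qed.

Lemma gfun_ge0 t : 0 <= t -> 0 <= gfun t.
Proof. move=> t0; rewrite /gfun le_max; apply/orP; right; exact: exprn_ge0. Qed.

Lemma gfun_lt t : 0 < t -> t < 1 -> gfun t < t.
Proof.
move=> t0 t1; rewrite /gfun gt_max; apply/andP; split.
  have := absp_lt1; have := abs_ge0 (p%:R : C); nra.
by rewrite ltr_iXnr // prime_gt1.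
Qed.

Lemma gfun_mono s t : 0 <= s -> s <= t -> gfun s <= gfun t.
Proof.
move=> s0 st; rewrite /gfun ge_max !le_max; apply/andP; split; apply/orP.
  by left; apply: ler_wpM2l.
by right; apply: lerXn2r => //; rewrite ?nnegrE //; apply: le_trans st.
Qed.

Lemma binom_p (x : C) t : abs x <= t -> t <= 1 -> abs ((1 + x) ^+ p - 1) <= gfun t.
Proof.
move=> xt t1; have t0 : 0 <= t := le_trans (abs_ge0 _) xt.
have p1 : (1 < p)%N := prime_gt1 pprime.
rewrite [1 + x]addrC exprD1n big_ord_recl /= expr0 bin0 mulr1n addrC addKr.
apply: abs_sum_le; first exact: gfun_ge0.
move=> i _; rewrite /bump /= add1n.
have xi : abs (x ^+ i.+1) <= t.
  rewrite absX; apply: (le_trans _ xt); apply: ler_iXnr => //; exact: (le_trans xt t1).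
case: (ltngtP i.+1 p) => hi.
- have hb : (p %| 'C(p, i.+1))%N by apply: prime_dvd_bin => //; rewrite hi.
  have [m hm] := dvdnP hb.
  rewrite hm -mulr_natl natrM absM absM.
  apply: le_trans (_ : abs (p%:R : C) * t <= gfun t); last by rewrite /gfun le_max lexx.
  rewrite [abs m%:R * _]mulrC -mulrA; apply: ler_wpM2l; first exact: abs_ge0.
  rewrite -[t]mul1r; apply: ler_pM => //; exact: abs_nat_le1.
- by move: (ltn_ord i); lia.
- rewrite hi binn mulr1n absX; apply: le_trans (_ : t ^+ p <= gfun t); last by rewrite /gfun le_max lexx orbT.
  by apply: lerXn2r; rewrite ?nnegrE.
Qed.

Lemma binom_q (x : C) t k : (0 < k)%N -> abs x <= t -> t <= 1 ->
  abs ((1 + x) ^+ (p ^ k) - 1) <= gfun t.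
Proof.
move=> + xt t1; have t0 : 0 <= t := le_trans (abs_ge0 _) xt.
elim: k => [//|k IH] _; case: k IH => [_|k IH]; first by rewrite expn1; apply: binom_p.
have h := IH isT.
rewrite expnS mulnC exprM.
have -> : (1 + x) ^+ (p ^ k.+1) = 1 + ((1 + x) ^+ (p ^ k.+1) - 1) by ring.
apply: le_trans (binom_p h _) _; first by apply: le_trans (gfun_le t0 t1) t1.
apply: gfun_le; [exact: gfun_ge0 | exact: le_trans (gfun_le t0 t1) t1].
Qed.

Lemma seq_argmax (phi : int -> R) (s : seq int) : s != [::] ->
  exists2 j, j \in s & forall n, n \in s -> phi n <= phi j.
Proof.
elim: s => [//|x s IH] _.
case: (eqVneq s [::]) => [->|ne].
  by exists x; rewrite ?mem_head // => n; rewrite inE => /eqP ->.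
have [j js hj] := IH ne.
case: (leP (phi x) (phi j)) => h.
  exists j; first by rewrite inE js orbT.
  by move=> n; rewrite inE => /orP [/eqP ->|/hj].
exists x; first exact: mem_head.
move=> n; rewrite inE => /orP [/eqP ->//|/hj h2]; apply: le_trans h2 _; exact: ltW.
Qed.

Lemma sum_dom (n : nat) (F : 'I_n -> C) (i0 : 'I_n) : F i0 != 0 ->
  (forall i, i != i0 -> abs (F i) < abs (F i0)) -> \sum_(i < n) F i != 0.
Proof.
move=> nz h; rewrite (bigD1 i0) //=; apply/eqP => e.
have : abs (F i0 + \sum_(i < n | i != i0) F i) = abs (F i0).
  apply: absD_eq; apply: abs_sum_lt; [exact: abs_neq0 | exact: h].
by rewrite e abs0 => /esym /abs_eq0 /eqP; rewrite (negPf nz).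
Qed.

Lemma prod_lt1 (s : seq C) (y : C) : abs (\prod_(z <- s) (y - z)) < 1 ->
  exists2 z, z \in s & abs (y - z) < 1.
Proof.
elim: s => [|z s IH]; first by rewrite big_nil abs1 ltxx.
rewrite big_cons absM => h.
case: (ltP (abs (y - z)) 1) => hz; first by exists z; rewrite ?mem_head.
have : abs (\prod_(j <- s) (y - j)) < 1.
  have := abs_ge0 (\prod_(j <- s) (y - j)); nra.
by move/IH => [w ws hw]; exists w; rewrite // inE ws orbT.
Qed.

Lemma unit_of_abs (x : C) : abs x = 1 -> x \is a GRing.unit.
Proof. by move=> h; rewrite unitfE; apply/eqP => x0; move: h; rewrite x0 abs0; apply/eqP; rewrite eq_sym oner_eq0. Qed.
Lemma null_le a b : null a -> (forall n, abs (b n) <= abs (a n)) -> null b.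
Proof. move=> na h eps e0; have [N hN] := na _ e0; exists N => n hn; exact: le_lt_trans (h n) (hN n hn). Qed.

Lemma ev_ext a b y : (forall n, a n = b n) -> ev a y = ev b y.
Proof. by move=> h; have -> : a = b by apply: FunctionalExtensionality.functional_extensionality. Qed.

Lemma stepC (f : int -> C) (q k : nat) (m : int) : null f -> (0 < k)%N -> q = (p ^ k)%N ->
  (forall y, abs y = 1 -> ev f y ^+ q = ev f (y ^+ q)) ->
  (forall n, abs (f n) <= 1) -> abs (f m) = 1 ->
  (forall n, abs (f n) = 1 -> n = m) -> special f.
Proof.
move=> nf k0 hq Hfrob f1 fm1 udom.
have q0 : (0 < q)%N by rewrite hq expn_gt0 prime_gt0.
set r := fun n => if n == m then 0 else f n.
have hr1 : forall n, abs (r n) < 1.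
  move=> n; rewrite /r; case: eqP => [_|nm]; first by rewrite abs0 ltr01.
  rewrite lt_neqAle f1 andbT; apply/eqP => /udom; exact: nm.
have nr : null r by apply: (null_le nf) => n; rewrite /r; case: eqP => _; rewrite ?abs0 ?abs_ge0.
have [j0 hj0] := max_index nr; set delta := abs (r j0).
have d0 : 0 <= delta := abs_ge0 _.
have d1 : delta < 1 := hr1 j0.
have nmono : forall c, null (fun n => if n == m then c else 0).
  move=> c; apply: (null_fin (M := `|m|%N)) => n hn; case: eqP => // e; by move: hn; rewrite e ltnn.
have decomp : forall y, abs y = 1 -> ev f y = f m * y ^ m + ev r y.
  move=> y y1; have := ev_sub nf nr y1.
  rewrite (@ev_ext _ (fun n => if n == m then f m else 0)); last first.
    by move=> n; rewrite /r; case: eqP => [->|_]; rewrite ?subr0 ?subrr.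
  by rewrite ev_mono // => ->; rewrite subrK.
have dz : delta = 0.
  apply/eqP; rewrite eq_le d0 andbT; rewrite leNgt; apply/negP => dpos.
  set c := f m ^+ q - f m.
  set s := fun n => r n - (if n == m then c else 0).
  have ns : null s by apply: null_sub.
  have evs : forall z, abs z = 1 -> ev s z = ev r z - c * z ^ m.
    by move=> z z1; rewrite /s ev_sub // ev_mono.
  have bnd : forall z, abs z = 1 -> abs (ev s z) <= gfun delta.
    move=> z z1; have [y hy] := nth_root z q0.
    have y1 : abs y = 1.
      by have := congr1 abs hy; rewrite absX z1 => /eqP; rewrite pexpr_eq1 // => /eqP.
    set fmu := f m * y ^ m.
    have fmu1 : abs fmu = 1 by rewrite /fmu absM fm1 (absXz1 _ y1) mul1r.
    have fmu0 : fmu != 0 by apply/eqP => e; move: fmu1; rewrite e abs0; apply/eqP; rewrite eq_sym oner_eq0.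
    set x := ev r y / fmu.
    have xb : abs x <= delta by rewrite /x absM absV fmu1 invr1 mulr1; apply: ev_le.
    have efy : ev f y = fmu * (1 + x) by rewrite decomp // /x mulrDr mulr1 mulrCA mulfV ?mulr1.
    have fmuq : fmu ^+ q = f m ^+ q * z ^ m.
      rewrite /fmu exprMn -hy; congr (_ * _).
      by rewrite (_ : (y ^ m) ^+ q = (y ^ m) ^ q%:Z) // exprzAC.
    have : ev s z = f m ^+ q * z ^ m * ((1 + x) ^+ q - 1).
      rewrite evs //.
      have -> : ev r z = ev f z - f m * z ^ m by rewrite decomp // [f m * _ + _]addrC addrK.
      have -> : ev f z = ev f y ^+ q by rewrite -hy Hfrob.
      rewrite efy exprMn fmuq /c; ring.
    move=> ->; rewrite !absM absX fm1 expr1n absXz1 // !mul1r.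
    rewrite hq; apply: binom_q => //; exact: ltW.
  have [j [hj [y' [y1' hy']]]] := maxmod ns.
  have rj0 : r j0 != 0 by apply/eqP => e; move: dpos; rewrite /delta e abs0 ltxx.
  have j0m : j0 != m by apply/eqP => e; move: rj0; rewrite /r e eqxx eqxx.
  have sj0 : s j0 = r j0 by rewrite /s (negPf j0m) subr0.
  have : delta <= gfun delta.
    have e : delta = abs (s j0) by rewrite sj0.
    rewrite {1}e; apply: le_trans (hj j0) _; apply: le_trans hy' _; exact: (bnd _ y1').
  by rewrite leNgt gfun_lt.
have r0 : forall n, r n = 0.
  by move=> n; apply/abs_eq0/eqP; rewrite eq_le abs_ge0 andbT -dz hj0.
have fz : forall n, f n = if n == m then f m else 0.
  move=> n; case: eqP => [->//|nm]; by have := r0 n; rewrite /r; case: eqP.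
exists (f m), m.
have er : ev r 1 = 0.
  apply/abs_eq0/eqP; rewrite eq_le abs_ge0 andbT; apply: ev_le => //; first exact: abs1.
  by move=> n; rewrite r0 abs0.
have ev1 : ev f 1 = f m by rewrite decomp ?abs1 // er addr0 exp1rz mulr1.
have hq1 := Hfrob 1 abs1; rewrite expr1n ev1 in hq1.
have q1 : (1 < q)%N.
  rewrite hq; apply: (leq_trans (prime_gt1 pprime)); rewrite -{1}(expn1 p); apply: leq_pexp2l => //.
  exact: prime_gt0.
have fm0 : f m != 0 by apply/eqP => e; move: fm1; rewrite e abs0; apply/eqP; rewrite eq_sym oner_eq0.
split; last exact: fz.
exists q.-1; split; first by lia.
apply: (mulfI fm0); rewrite -exprS prednK ?mulr1 //; lia.
Qed.
Lemma arith_out (n L0 M0 : int) (d Qz : nat) : M0 = L0 + d%:Z -> (d < Qz)%N ->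
  (Qz <= `|n - L0|)%N -> n < L0 \/ M0 < n.
Proof. lia. Qed.

Lemma stepB (f : int -> C) (q : nat) : null f -> (1 < q)%N -> (q%:R : C) != 0 ->
  (forall n y, abs y = 1 -> ev f y ^+ (q ^ n) = ev f (y ^+ (q ^ n))) ->
  (forall n, abs (f n) <= 1) -> forall L M, abs (f L) = 1 -> abs (f M) = 1 -> L = M.
Proof.
move=> nf q1 qR Hiter f1 L M hL hM; apply/eqP/negPn/negP => neq.
have [K hK] := nf 1 ltr01.
have domK : forall n, abs (f n) = 1 -> (`|n| <= K)%N.
  by move=> n hn; rewrite leqNgt; apply/negP => /hK; rewrite hn ltxx.
set D := filter (fun n => abs (f n) == 1) (Wn K).
have memD : forall n, abs (f n) = 1 -> n \in D.
  by move=> n hn; rewrite (@mem_filter int) hn eqxx mem_W; exact: domK.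
have inD : forall n, n \in D -> abs (f n) = 1.
  by move=> n; rewrite (@mem_filter int) => /andP [/eqP].
have Dne : D != [::] by apply/eqP => e; have := memD L hL; rewrite e.
have [L0 L0D hL0] := seq_argmax (fun n => - (n%:~R : R)) Dne.
have [M0 M0D hM0] := seq_argmax (fun n => (n%:~R : R)) Dne.
have minL0 : forall n, abs (f n) = 1 -> L0 <= n.
  by move=> n hn; have := hL0 n (memD n hn); rewrite lerN2 ler_int.
have maxM0 : forall n, abs (f n) = 1 -> n <= M0.
  by move=> n hn; have := hM0 n (memD n hn); rewrite ler_int.
have fL0 : abs (f L0) = 1 := inD _ L0D.
have fM0 : abs (f M0) = 1 := inD _ M0D.
have LM : L0 < M0.
  have := minL0 L hL; have := minL0 M hM; have := maxM0 L hL; have := maxM0 M hM.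
  have : L <> M by apply/eqP.
  lia.
have outside : forall n, (n < L0) \/ (M0 < n) -> abs (f n) < 1.
  move=> n hn; rewrite lt_neqAle f1 andbT; apply/eqP => e.
  have := minL0 n e; have := maxM0 n e; lia.
set d := `|M0 - L0|%N.
have d1 : (0 < d)%N by rewrite /d; lia.
have dM : M0 = L0 + d%:Z by rewrite /d; lia.
set E := fun i : nat => f (L0 + i%:Z).
set P : {poly C} := \poly_(i < d.+1) E i.
set rest := fun n => if (L0 <= n) && (n <= M0) then 0 else f n.
have nrest : null rest.
  by apply: (null_le nf) => n; rewrite /rest; case: ifP => _; rewrite ?abs0 ?abs_ge0.
have [jr hjr] := max_index nrest; set delta := abs (rest jr).
have dl1 : delta < 1.
  rewrite /delta /rest; case: ifP => h; first by rewrite abs0 ltr01.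
  apply: outside; move: h => /negbT; rewrite negb_and -!ltNge => /orP [] h; [left|right] => //.
have decomp : forall y, abs y = 1 -> ev f y = y ^ L0 * P.[y] + ev rest y.
  move=> y y1; have yu := unit_of_abs y1.
  suff e1 : ev f y - ev rest y = y ^ L0 * P.[y] by rewrite -e1 subrK.
  rewrite -(ev_sub nf nrest y1).
  rewrite (@ev_fin _ _ (`|L0| + `|M0|)%N) //; last first.
    move=> n hn; rewrite /rest; case: ifP => h; last by rewrite subrr.
    by exfalso; move: h => /andP [h1 h2]; lia.
  rewrite /psum (@sum_sub_supp [seq L0 + i%:Z | i <- iota 0 d.+1]).
  - rewrite big_map (_ : iota 0 d.+1 = index_iota 0 d.+1); last by rewrite /index_iota subn0.
    rewrite big_mkord /P horner_poly mulr_sumr; apply: eq_bigr => i _.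
    rewrite /rest ifT; last by apply/andP; split; have := ltn_ord i; lia.
    by rewrite subr0 exprzDr // /E mulrCA.
  - by rewrite map_inj_uniq ?iota_uniq // => a b /addrI [].
  - exact: uniq_W.
  - by move=> n /mapP [i]; rewrite mem_iota => hi ->; rewrite mem_W; lia.
  move=> n _ hn; rewrite /rest; case: ifP => h; last by rewrite subrr mul0r.
  exfalso; move/negP: hn; apply; apply/mapP; exists `|n - L0|%N; last by move: h => /andP [h1 h2]; lia.
  by rewrite mem_iota; move: h => /andP [h1 h2]; lia.
have hPf : forall y, abs y = 1 -> abs (ev f y) < 1 -> abs P.[y] < 1.
  move=> y y1 h; have e : y ^ L0 * P.[y] = ev f y - ev rest y by rewrite decomp // addrK.
  have : abs (y ^ L0 * P.[y]) < 1.
    by rewrite e; apply: absBlt => //; apply: le_lt_trans (ev_le nrest y1 hjr) dl1.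
  by rewrite absM absXz1 // mul1r.
have hfP : forall y, abs y = 1 -> P.[y] = 0 -> abs (ev f y) < 1.
  by move=> y y1 h; rewrite decomp // h mulr0 add0r; exact: le_lt_trans (ev_le nrest y1 hjr) dl1.
have Ed : E d = f M0 by rewrite /E dM.
have E0 : E 0%N = f L0 by rewrite /E addr0.
have fM0nz : f M0 != 0 by apply/eqP => e; move: fM0; rewrite e abs0; apply/eqP; rewrite eq_sym oner_eq0.
have fL0nz : f L0 != 0 by apply/eqP => e; move: fL0; rewrite e abs0; apply/eqP; rewrite eq_sym oner_eq0.
have lcP : lead_coef P = f M0 by rewrite /P lead_coef_poly //= Ed.
have szP : size P = d.+1 by rewrite /P size_poly_eq //= Ed.
have [rs hrs] := factor P; rewrite lcP in hrs.
have szrs : size rs = d.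
  by have := congr1 (fun P0 : {poly C} => size P0) hrs; rewrite /= size_scale // size_prod_XsubC szP => -[].
have hornP : forall y, P.[y] = f M0 * \prod_(z <- rs) (y - z).
  move=> y; rewrite {1}hrs hornerZ horner_prod; congr (_ * _).
  by apply: eq_bigr => z _; rewrite hornerXsubC.
have near : forall y, abs P.[y] < 1 -> exists2 z, z \in rs & abs (y - z) < 1.
  by move=> y; rewrite hornP absM fM0 mul1r; exact: prod_lt1.
have root_rs : forall z, z \in rs -> P.[z] = 0.
  by move=> z hz; rewrite hornP (big_rem _ hz) /= subrr mul0r mulr0.
have abs_root : forall z, z \in rs -> abs z = 1.
  move=> z hz; have := root_rs z hz; rewrite /P horner_poly => h0.
  case: (ltgtP (abs z) 1) => hz1 //.
    have := @sum_dom d.+1 (fun i => E i * z ^+ i) ord0.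
    rewrite h0 eqxx /= expr0 mulr1 E0 => /(_ fL0nz) H; suff : false by []; apply: H => i i0.
    rewrite absM fL0 absX; apply: le_lt_trans (ler_wpM2r (exprn_ge0 _ (abs_ge0 _)) (f1 _)) _.
    by rewrite mul1r exprn_ilt1 ?abs_ge0.
  have zn0 : z != 0 by apply/eqP => e; move: hz1; rewrite e abs0 ltr10.
  have := @sum_dom d.+1 (fun i => E i * z ^+ i) ord_max.
  rewrite h0 eqxx /= Ed => H; suff : false by []; apply: H.
    by rewrite mulf_neq0 // expf_neq0.
  move=> i im; rewrite !absM fM0 mul1r !absX.
  apply: le_lt_trans (ler_wpM2r (exprn_ge0 _ (abs_ge0 _)) (f1 _)) _.
  rewrite mul1r ltr_eXn2l //; have := ltn_ord i; move: im; rewrite neq_ltn => /orP [] //.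
  by move=> h1 h2; move: (leq_trans h1 (ltnSE h2)); rewrite ltnn.
have rs_ne : (0 < size rs)%N by rewrite szrs.
set beta := rs`_0.
have betain : beta \in rs := mem_nth 0 rs_ne.
have b1 : abs beta = 1 := abs_root _ betain.
have fb : abs (ev f beta) < 1 := hfP _ b1 (root_rs _ betain).
set zz := fun i : nat => beta ^+ (q ^ i).
have zz1 : forall i, abs (zz i) = 1 by move=> i; rewrite /zz absX b1 expr1n.
have fzz : forall i, abs (ev f (zz i)) < 1.
  move=> i; rewrite /zz -Hiter // absX exprn_ilt1 ?abs_ge0 //.
  by rewrite expn_eq0 negb_and; apply/orP; left; rewrite -lt0n; lia.
pose o0 : 'I_(size rs) := Ordinal rs_ne.
pose sigma := fun i : 'I_d.+1 => odflt o0 [pick j : 'I_(size rs) | abs (zz i - rs`_j) < 1].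
have hsig : forall i : 'I_d.+1, abs (zz i - rs`_(sigma i)) < 1.
  move=> i; rewrite /sigma; case: pickP => [j hj //|hno] /=.
  exfalso; have [z zin hz] := near _ (hPf _ (zz1 i) (fzz i)).
  have hi : (index z rs < size rs)%N by rewrite index_mem.
  by have := hno (Ordinal hi); rewrite /= nth_index // hz.
have key : forall a b : 'I_d.+1, (a < b)%N -> abs (zz a - zz b) < 1 -> False.
  move=> a b hab' hclose.
  set rr := (b - a)%N.
  have rr0 : (0 < rr)%N by rewrite /rr subn_gt0.
  set z := zz a.
  have zb : zz b = z ^+ (q ^ rr) by rewrite /zz /z -exprM -expnD subnKC // ltnW.
  have qq : (q <= q ^ rr)%N by rewrite -{1}(expn1 q); apply: leq_pexp2l (ltnW q1) rr0.
  set N := (q ^ rr).-1%N.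
  have qrr : (q ^ rr)%N = N.+1 by rewrite /N prednK // expn_gt0 (ltnW q1).
  have N0 : (0 < N)%N by rewrite /N -subn1 subn_gt0; exact: leq_trans q1 qq.
  have z1 : abs z = 1 := zz1 a.
  have zN : abs (z ^+ N - 1) < 1.
    have e : zz b - z = z * (z ^+ N - 1) by rewrite zb qrr exprS; ring.
    have : abs (z * (z ^+ N - 1)) < 1 by rewrite -e absB.
    by rewrite absM z1 mul1r.
  have [rs2 hrs2] := factor ('X^N - 1).
  have lc2 : lead_coef ('X^N - 1 : {poly C}) = 1 by rewrite -polyC1 lead_coefXnsubC.
  rewrite lc2 scale1r in hrs2.
  have ev2 : forall y, y ^+ N - 1 = \prod_(w <- rs2) (y - w).
    move=> y; have := congr1 (fun P0 : {poly C} => P0.[y]) hrs2.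
    rewrite /= horner_prod hornerD hornerN hornerXn hornerC => ->.
    by apply: eq_bigr => w _; rewrite hornerXsubC.
  have := zN; rewrite ev2 => /prod_lt1 [w win hw].
  have wN : w ^+ N = 1.
    by apply/eqP; rewrite -subr_eq0 ev2 (big_rem _ win) /= subrr mul0r.
  have w1 : abs w = 1 := unit_abs1 N0 wN.
  have fw : abs (ev f w) < 1.
    have h1 := ev_lip nf w1 z1 f1.
    have e : ev f w = ev f z + (ev f w - ev f z) by ring.
    rewrite e; apply: absDlt; first exact: fzz.
    by apply: le_lt_trans h1 _; rewrite absB.
  have vfix : ev f w ^+ (q ^ rr) = ev f w by rewrite Hiter // qrr exprS wN mulr1.
  have v0 : ev f w = 0.
    set v := ev f w in fw vfix *.
    have hvN : v ^+ N != 1.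
      apply/eqP => e; have := congr1 abs e; rewrite absX abs1 => e2.
      by move: (exprn_ilt1 N (abs_ge0 v) fw); rewrite e2 ltxx -lt0n N0.
    have : v * (v ^+ N - 1) = 0 by rewrite mulrBr mulr1 -exprS -qrr vfix subrr.
    by move/eqP; rewrite mulf_eq0 subr_eq0 (negPf hvN) orbF => /eqP.
  set Qz := (q ^ d)%N.
  have QzR : (Qz%:R : C) != 0 by rewrite /Qz natrX expf_neq0.
  have Qzd : (d < Qz)%N := ltn_expl d q1.
  have Qz0 : (0 < Qz)%N by apply: leq_ltn_trans _ Qzd.
  have [xi hxi] := prim_exists Qz0 QzR.
  have [y0 hy0] := nth_root w Qz0.
  have y01 : abs y0 = 1.
    by have := congr1 abs hy0; rewrite absX w1 => /eqP; rewrite pexpr_eq1 // => /eqP.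
  have xi1 : abs xi = 1 := unit_abs1 Qz0 (prim_expr_order hxi).
  have zeros : forall i : 'I_Qz, ev f (y0 * xi ^+ i) = 0.
    move=> i; have yi1 : abs (y0 * xi ^+ i) = 1 by rewrite absM absX xi1 expr1n y01 mulr1.
    have := Hiter d _ yi1; rewrite -/Qz exprMn hy0 exprAC (prim_expr_order hxi) expr1n mulr1 v0.
    by move/eqP; rewrite expf_eq0 => /andP [_ /eqP].
  have hcl : forall n, n != L0 -> (Qz%:Z %| n - L0)%Z -> abs (f n) < abs (f L0).
    move=> n nL /dvdzP [t ht]; rewrite fL0; apply: outside.
    have t0 : t != 0.
      by apply/eqP => t0; move: ht; rewrite t0 mul0r => /eqP; rewrite subr_eq0 (negPf nL).
    have : (Qz <= `|n - L0|)%N by rewrite ht abszM /=; apply: leq_pmull; rewrite absz_gt0.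
    exact: (arith_out dM Qzd).
  have := trace nf y01 hxi QzR fL0nz hcl.
  rewrite big1 ?abs0; last by move=> i _; rewrite zeros mul0r.
  rewrite fL0 mulr1 => /esym /abs_eq0 /eqP; rewrite (negPf QzR) //.
have : ~~ injectiveb sigma.
  apply/negP => /injectiveP hinj; have := @leq_card _ _ sigma hinj; rewrite !card_ord szrs ltnn //.
move/injectivePn => [a [b ab sab]].
have hab : abs (zz a - zz b) < 1.
  have e : zz a - zz b = (zz a - rs`_(sigma a)) - (zz b - rs`_(sigma b)) by rewrite sab; ring.
  by rewrite e; apply: absBlt; apply: hsig.
case: (ltngtP a b) => h.
- exact: key h hab.
- by apply: (key b a h); rewrite absB.
- by move/eqP: ab; apply; apply: val_inj.
Qed.
Lemma main_sec (f : int -> C) (q k : nat) (zeta zeta' : C) :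
  null f -> (0 < k)%N -> q = (p ^ k)%N -> is_root_of_unity_C zeta -> is_root_of_unity_C zeta' ->
  laurent_eval_to abs f zeta zeta' -> laurent_pow_to abs f q (laurent_subst_pow q f) -> special f.
Proof.
move=> nf k0 hq [n1 [n10 hz]] [n2 [n20 hz']] hev hpow.
have q1 : (1 < q)%N.
  rewrite hq; apply: (leq_trans (prime_gt1 pprime)); rewrite -{1}(expn1 p).
  exact: leq_pexp2l (prime_gt0 pprime) k0.
have q0 : (0 < q)%N := ltnW q1.
have z1 : abs zeta = 1 := unit_abs1 n10 hz.
have z1' : abs zeta' = 1 := unit_abs1 n20 hz'.
have evz : ev f zeta = zeta' := ev_eq nf z1 (proj1 (eval_psum f zeta zeta') hev).
have Hfrob : forall y, abs y = 1 -> ev f y ^+ q = ev f (y ^+ q).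
  by move=> y y1; apply: frob.
have Hiter : forall n y, abs y = 1 -> ev f y ^+ (q ^ n) = ev f (y ^+ (q ^ n)).
  by move=> n y y1; apply: frob_iter.
have [jA [hjA [yA [yA1 hyA]]]] := maxmod nf.
have B1 : 1 <= abs (f jA) by rewrite -z1' -evz; apply: ev_le.
have Ble : abs (f jA) <= 1.
  have h2 : abs (f jA) ^+ q <= abs (ev f yA) ^+ q by apply: lerXn2r; rewrite ?nnegrE ?abs_ge0.
  have h1 : abs (f jA) ^+ q <= abs (f jA).
    apply: le_trans h2 _; rewrite -absX Hfrob //; apply: ev_le => //.
    by rewrite absX yA1 expr1n.
  rewrite leNgt; apply/negP => hB; have := ltr_eXnr q hB; rewrite q1 => hlt.
  by move: (lt_le_trans hlt h1); rewrite ltxx.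
have f1 : forall n, abs (f n) <= 1 := fun n => le_trans (hjA n) Ble.
have fj1 : abs (f jA) = 1 by apply/eqP; rewrite eq_le Ble B1.
have pR : (p%:R : C) != 0.
  apply/eqP => e; move: absp; rewrite e abs0 => /eqP; rewrite eq_sym invr_eq0 pnatr_eq0 => /eqP p0.
  by move: (prime_gt0 pprime); rewrite p0.
have qR : (q%:R : C) != 0 by rewrite hq natrX expf_neq0.
have ud := stepB nf q1 qR Hiter f1.
exact: (stepC nf k0 hq Hfrob f1 fj1 (fun n hn => ud n jA hn fj1)).
Qed.
End Basic.

Unset Implicit Arguments.
Set Strict Implicit.

Theorem mainTheorem5 (R : realType) (C : fieldType) (abs : C -> R) (p : nat)
  (K : C -> Prop) (f : int -> C) (q : nat) (zeta zeta' : C) :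
  prime p ->
  is_Cp abs p ->
  is_padic_field abs K ->
  in_AK11 abs K f ->
  (exists k : nat, (0 < k)%N /\ q = (p ^ k)%N) ->
  is_root_of_unity_C zeta -> is_root_of_unity_C zeta' ->
  laurent_eval_to abs f zeta zeta' ->
  laurent_pow_to abs f q (laurent_subst_pow q f) ->
  special f.
Proof.
move=> pp [[a_ge0 a_eq0 aM aD ap] closed compl _] _ [_ nf] [k [k0 hq]] hz hz' hev hpow.
exact: (main_sec a_ge0 a_eq0 aM aD compl closed pp ap nf k0 hq hz hz' hev hpow).
Qed.
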